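(* For $N\in\omega$ let $T_N=\{0,1\}^{\le N}$ be the set of $0$-$1$ sequences of length at most $N$ (including the empty sequence); for $s\in\{0,1\}^N$ let $F_s=\{s{\upharpoonright}k: k\le N\}\subseteq T_N$, and let $\mathcal{F}_N$ be the hereditary closure of $\{F_s: s\in\{0,1\}^N\}$. Let $x=\sum_{s\in\{0,1\}^N}\chi_{F_s}\in\mathbb{R}^{T_N}$. Then $\lVert x\rVert^{\mathcal{F}_N}=2^N(1+N/2)$, while $\lVert\chi_{F_s}\rVert^{\mathcal{F}_N}=1$ for each $s$. Consequently, if $T$ is the disjoint union of the sets $T_N$ ($N\in\omega$) (identified with $\omega$ via a bijection) and $\mathcal{F}=\bigcup_N\mathcal{F}_N$, then $\mathcal{F}$ is a compact hereditary family of finite sets covering $T$, there is no constant $C>0$ such that $\lVert\sum_{i\le n}x_i\rVert^{\mathcal{F}}\le C\sum_{i\le n}\lVert x_i\rVert^{\mathcal{F}}$ for all finite families $x_1,\dots,x_n\in c_{00}$, and $X^\mathcal{F}$ is not isomorphic to $X_\mathcal{F}^*$.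
   Context: For a countable index set $I$ and a family $\mathcal{F}$ of finite subsets of $I$ (hereditary: closed under subsets; covering $I$), a partition is a family $\mathcal{P}$ of subsets of $I$ with $\emptyset\in\mathcal{P}$, $\bigcup\mathcal{P}=I$, elements pairwise disjoint; $\mathbb{P}_\mathcal{F}$ is the set of partitions contained in $\mathcal{F}$; for $x\in\mathbb{R}^I$, $\lVert x\rVert^{\mathcal{F}}=\inf_{\mathcal{P}\in\mathbb{P}_\mathcal{F}}\sum_{F\in\mathcal{P}}\sup_{k\in F}|x(k)|$. The hereditary closure of a family is the smallest hereditary family containing it. $\chi_A$ is the characteristic function of $A$. $X^\mathcal{F}$ is the completion of $c_{00}$ (finitely supported sequences) under $\lVert\cdot\rVert^\mathcal{F}$, $X_\mathcal{F}$ the completion of $c_{00}$ under $\lVert x\rVert_\mathcal{F}=\sup_{F\in\mathcal{F}}\sum_{k\in F}|x(k)|$, and $X_\mathcal{F}^*$ its dual. Compactness refers to the topology of $2^I$. *)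

(* Defs.v *)
From HB Require Import structures.
From mathcomp Require Import all_boot all_order all_algebra.
From mathcomp Require Import all_classical all_reals all_analysis.
Import Order.TTheory GRing.Theory Num.Theory.

Set Implicit Arguments.
Unset Strict Implicit.
Unset Printing Implicit Defensive.

Local Open Scope classical_set_scope.
Local Open Scope ring_scope.

Section Families.
Context (I : choiceType).

Definition hereditary (F : set (set I)) : Prop :=
  forall A B, F A -> B `<=` A -> F B.

Definition hered_closure (G : set (set I)) : set (set I) :=
  [set A | forall H, hereditary H -> G `<=` H -> H A].

Definition covering (F : set (set I)) : Prop :=
  \bigcup_(A in F) A = setT.

Definition finite_members (F : set (set I)) : Prop :=
  forall A, F A -> finite_set A.

Definition is_partition (P : set (set I)) : Prop :=
  [/\ P set0, \bigcup_(A in P) A = setT &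
      forall A B, P A -> P B -> A <> B -> A `&` B = set0].

Definition partitions_in (F : set (set I)) : set (set (set I)) :=
  [set P | is_partition P /\ P `<=` F].

Definition c00 (R : realType) (x : I -> R) : Prop :=
  finite_set [set k | x k != 0].

Definition blocksup (R : realType) (x : I -> R) (A : set I) : \bar R :=
  ereal_sup ([set 0%E] `|` [set (`|x k|)%:E | k in A]).

Definition upnorm (R : realType) (F : set (set I)) (x : I -> R) : \bar R :=
  ereal_inf [set (\esum_(A in P) blocksup x A)%E | P in partitions_in F].

Definition lownorm (R : realType) (F : set (set I)) (x : I -> R) : \bar R :=
  ereal_sup [set (\esum_(k in A) (`|x k|)%:E)%E | A in F].

Definition pairing (R : realType) (f x : I -> R) : R :=
  (\sum_(k \in [set k | x k != 0]) f k * x k)%R.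

(** Norm of f as a functional on (c00, ||.||_F), i.e. the norm of the
    dual space X_F^* (continuous functionals on the completion X_F are
    exactly the bounded functionals on the dense subspace c00, and these
    are represented by their values f k on the unit vectors). *)
Definition dualnorm (R : realType) (F : set (set I)) (f : I -> R) : \bar R :=
  ereal_sup [set (`|pairing f x|)%:E |
              x in [set x | c00 x /\ (lownorm F x <= 1)%E]].

End Families.

Definition TN (N : nat) := {s : seq bool | size s <= N}%N.

Definition Fs (N : nat) (s : N.-tuple bool) : set (TN N) :=
  [set t | exists2 k : nat, (k <= N)%N & val t = take k s].

Definition FN (N : nat) : set (set (TN N)) :=
  hered_closure [set Fs s | s in [set: N.-tuple bool]].
Arguments FN N : clear implicits.

Definition xN (R : realType) (N : nat) : TN N -> R :=
  fun t => \sum_(s : N.-tuple bool) (\1_(Fs s) t : R).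
Arguments xN R N : clear implicits.

Definition Tunion := {N : nat & TN N}.

Definition Funion : set (set Tunion) :=
  [set A | exists N : nat, exists2 B, FN N B & A = existT TN N @` B].

Definition charfun (I : Type) (A : set I) : {ptws I -> bool} :=
  fun i => `[< A i >].

(* Main.v *)
Require Import Defs.
From HB Require Import structures.
From mathcomp Require Import all_boot all_order all_algebra.
From mathcomp Require Import all_classical all_reals all_analysis.
Import Order.TTheory GRing.Theory Num.Theory.
Local Open Scope classical_set_scope.
Local Open Scope ring_scope.
Set Implicit Arguments.
Unset Strict Implicit.
Unset Printing Implicit Defensive.

Section General.
Context (R : realType) (I : choiceType).
Local Open Scope ereal_scope.

Lemma esum_partition (P : set (set I)) (a : I -> \bar R) :
  (forall A B, P A -> P B -> A <> B -> A `&` B = set0) -> (forall x, 0 <= a x) ->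
  \esum_(i in \bigcup_(A in P) A) a i = \esum_(A in P) \esum_(i in A) a i.
Proof.
move=> tP a0; rewrite esum_esum//; apply: reindex_esum => //; split.
- by move=> [/= A j] [PA Aj]; exists A.
- move=> [/= A1 j1] [/= A2 j2]; rewrite ?inE/=.
  move=> [P1 J1] [P2 J2] j12; subst j2; congr (_, _) => //.
  apply: contrapT => ne; have := tP _ _ P1 P2 ne.
  by move/seteqP => [+ _] => /(_ j1 (conj J1 J2)).
- by move=> j [A PA Aj]/=; exists (A, j).
Qed.

Lemma esum_subset (A B : set I) (a : I -> \bar R) :
  A `<=` B -> (forall x, B x -> 0 <= a x) ->
  \esum_(i in A) a i <= \esum_(i in B) a i.
Proof.
move=> AB a0; rewrite esum_mkcond [X in _ <= X]esum_mkcond.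
apply: le_esum => i _; case: ifPn => iA.
  have Bi : B i by apply: AB; move: iA; rewrite inE.
  by rewrite ifT ?inE.
by case: ifPn => // /[!inE] /a0.
Qed.

Lemma blocksup_ge0 (x : I -> R) A : 0 <= blocksup x A.
Proof. by apply: ereal_sup_ubound; left. Qed.

Lemma blocksup_ge (x : I -> R) A p : A p -> (`|x p|)%:E <= blocksup x A.
Proof. by move=> Ap; apply: ereal_sup_ubound; right; exists p. Qed.

Lemma blocksup_le (x : I -> R) A (M : R) : (0 <= M)%R ->
  (forall p, A p -> (`|x p| <= M)%R) -> blocksup x A <= M%:E.
Proof.
move=> M0 h; apply: ge_ereal_sup => y [->|[p Ap <-]]; first by rewrite lee_fin.
by rewrite lee_fin h.
Qed.

Lemma upnorm_lb (F : set (set I)) (x : I -> R) (W : I -> \bar R) :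
  (forall i, 0 <= W i) ->
  (forall A, F A -> \esum_(i in A) W i <= blocksup x A) ->
  \esum_(i in setT) W i <= upnorm F x.
Proof.
move=> W0 hW; apply: le_ereal_inf_tmp => _ [P [[P0 cov dis] PF] <-].
rewrite -cov esum_partition//; apply: le_esum => A PA; exact: hW (PF _ PA).
Qed.

Lemma upnorm_ub (F : set (set I)) (x : I -> R) (W : I -> \bar R) P :
  partitions_in F P -> (forall i, 0 <= W i) ->
  (forall A, P A -> blocksup x A <= \esum_(i in A) W i) ->
  upnorm F x <= \esum_(i in setT) W i.
Proof.
move=> hP W0 hW; have [[P0 cov dis] PF] := hP.
apply: le_trans (ereal_inf_lbound _) _; first by exists P.
rewrite -cov esum_partition//; exact: le_esum.
Qed.

End General.

Section Hered.
Context (I : choiceType).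
Lemma hc_hered (G : set (set I)) : hereditary (hered_closure G).
Proof. by move=> A B hA BA H hH GH; apply: hH (hA H hH GH) BA. Qed.
Lemma hc_sub (G : set (set I)) : G `<=` hered_closure G.
Proof. by move=> A GA H hH GH; apply: GH. Qed.
Lemma hc_min (G H : set (set I)) : hereditary H -> G `<=` H -> hered_closure G `<=` H.
Proof. by move=> hH GH A; apply. Qed.
End Hered.

Lemma FNP N (B : set (TN N)) : FN N B <-> exists s, B `<=` Fs s.
Proof.
split.
  apply: (@hc_min _ _ [set B | exists s, B `<=` Fs s]); first by move=> A C [s As] CA; exists s; apply: subset_trans As.
  by move=> A [s _ <-]; exists s.
move=> [s Bs]; apply: hc_hered Bs; apply: hc_sub; by exists s.
Qed.

From mathcomp Require Import zify ring lra.
Set Implicit Arguments.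
Unset Strict Implicit.
Unset Printing Implicit Defensive.
Lemma size_take_tuple N (s : N.-tuple bool) k : (size (take k s) <= N)%N.
Proof. by rewrite size_take size_tuple; case: ifP => // /ltnW. Qed.

Definition tk N (s : N.-tuple bool) (k : nat) : TN N :=
  @exist (seq bool) (fun x => (size x <= N)%N) (take k s) (size_take_tuple s k).

Lemma size_tk N (s : N.-tuple bool) k : (k <= N)%N -> size (val (tk s k)) = k.
Proof. by move=> kN; rewrite /= size_take size_tuple; case: ltngtP kN. Qed.

Lemma FsP N (s : N.-tuple bool) (t : TN N) :
  Fs s t <-> take (size (val t)) s = val t.
Proof.
split; last by move=> h; exists (size (val t)); [exact: (valP t)|].
move=> [k kN ->]; by rewrite size_take size_tuple; case: ltngtP kN => // ->.
Qed.

Lemma Fs_tk N (s : N.-tuple bool) k : (k <= N)%N -> Fs s (tk s k).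
Proof. by move=> kN; exists k. Qed.

Lemma card_prefix N (u : seq bool) : (size u <= N)%N ->
  #|[pred s : N.-tuple bool | take (size u) s == u]| = (2 ^ (N - size u))%N.
Proof.
move=> uN; set k := size u.
have P (r : (N - k).-tuple bool) : size (u ++ r) == N.
  by rewrite size_cat size_tuple subnKC.
pose f r := Tuple (P r).
have finj : injective f.
  move=> r1 r2 /(congr1 val) /= /eqP; rewrite eqseq_cat // => /andP[_ /eqP h].
  exact: val_inj.
rewrite -[X in (X ^ _)%N]card_bool -card_tuple -(card_imset _ finj).
apply: eq_card => s; rewrite !inE; apply/idP/idP.
  move=> /eqP h; apply/imsetP; exists [tuple of drop k s] => //.
  by apply: val_inj => /=; rewrite -h cat_take_drop.
by move=> /imsetP[r _ ->] /=; rewrite take_size_cat.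
Qed.

Lemma xNE (R : realType) N (t : TN N) :
  xN R N t = 2 ^+ (N - size (val t)).
Proof.
rewrite /xN (eq_bigr (fun s : N.-tuple bool => if take (size (val t)) s == val t then 1 else 0)); last first.
  move=> s _; rewrite indicE; case: eqP => h.
    by have -> : t \in Fs s by rewrite in_setE; apply/FsP.
  by have -> : t \in Fs s = false by apply/negbTE; apply/negP; rewrite in_setE => /FsP.
rewrite -big_mkcond sumr_const card_prefix; last exact: (valP t).
by rewrite -natrX -mulr_natl mulr1.
Qed.

Section Weights.
Context (R : realType) (N : nat).

Definition vw (k : nat) : R := if (k < N)%N then 2 ^+ (N - k.+1) else 1.
Definition cw (k : nat) : R := if (k < N)%N then 2^-1 else 1.
Definition ww (t : TN N) : R := vw (size (val t)).

Lemma vw_ge0 k : 0 <= vw k.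
Proof. by rewrite /vw; case: ifP => // _; rewrite exprn_ge0. Qed.
Lemma cw_ge0 k : 0 <= cw k.
Proof. by rewrite /cw; case: ifP => // _; rewrite invr_ge0. Qed.

Lemma Fs_image (s : N.-tuple bool) : Fs s = tk s @` `I_N.+1.
Proof.
apply/seteqP; split => t.
  move=> /FsP h; exists (size (val t)); first by rewrite /= ltnS; exact: (valP t).
  by apply: val_inj => /=.
by move=> [k kN <-]; apply: Fs_tk.
Qed.

Lemma esum_Fs (s : N.-tuple bool) (g : nat -> R) : (forall k, 0 <= g k) ->
  (\esum_(t in Fs s) (g (size (val t)))%:E = (\sum_(k < N.+1) g k)%:E)%E.
Proof.
move=> g0; rewrite Fs_image esum_image; last first.
  move=> k1 k2; rewrite !inE /= !ltnS => h1 h2 /(congr1 (fun t => size (val t))).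
  by rewrite !size_tk.
transitivity (\esum_(k in `I_N.+1) (g k)%:E)%E.
  by apply: eq_esum => k /= kN; rewrite size_tk // -ltnS.
rewrite esum_fset; last by move=> *; rewrite lee_fin.
  by rewrite -fsbig_ord sumEFin.
exact: finite_II.
Qed.

Lemma sum_vw m : (m <= N)%N ->
  \sum_(k < N.+1) (if (m <= k)%N then vw k else 0) = 2 ^+ (N - m).
Proof.
move=> mN.
have -> : \sum_(k < N.+1) (if (m <= k)%N then vw k else 0) = \sum_(m <= k < N.+1) vw k.
  by rewrite big_geq_mkord [RHS]big_mkcond.
suff h j : (j <= N)%N -> \sum_(N - j <= k < N.+1) vw k = 2 ^+ j.
  by rewrite -(h (N - m)%N) ?leq_subr // subKn.
elim: j => [_|j IH jN]; first by rewrite subn0 big_nat1 /vw ltnn.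
rewrite big_ltn; last by rewrite ltnS leq_subr.
have -> : ((N - j.+1).+1 = N - j)%N by rewrite subnSK.
rewrite IH ?(ltnW jN) // /vw ifT; last by lia.
have -> : (N - (N - j.+1).+1 = j)%N by lia.
by rewrite exprS mulr2n mulrDl !mul1r.
Qed.
End Weights.

Section Total.
Context (R : realType) (N : nat).
Local Open Scope ereal_scope.

Lemma vw_cw k : (k <= N)%N -> vw R N k = (cw R N k * 2 ^+ (N - k))%R.
Proof.
move=> kN; rewrite /vw /cw; case: ifP => kN'; last first.
  have -> : k = N by lia.
  by rewrite subnn mulr1.
have -> : (N - k = (N - k.+1).+1)%N by lia.
by rewrite exprS mulrA mulVf ?mul1r.
Qed.

Lemma sum_cw : (\sum_(k < N.+1) cw R N k = N%:R / 2 + 1)%R.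
Proof.
rewrite big_ord_recr /= {2}/cw ltnn.
rewrite (eq_bigr (fun _ : 'I_N => (2^-1)%R)); last by move=> [k kN] _; rewrite /cw /= kN.
by rewrite sumr_const card_ord mulr_natl.
Qed.

Lemma esum_ww_total :
  \esum_(t in [set: TN N]) (ww R t)%:E = ((2 ^+ N) * (1 + N%:R / 2))%:E.
Proof.
transitivity (\esum_(t in [set: TN N])
   \sum_(s : N.-tuple bool) ((cw R N (size (val t)) * \1_(Fs s) t)%R)%:E).
  apply: eq_esum => t _; rewrite sumEFin -mulr_sumr -/(xN R N t) xNE /ww vw_cw //.
  exact: (valP t).
rewrite esum_sum; last by move=> t s _ _; rewrite lee_fin; apply: mulr_ge0; [exact: cw_ge0|rewrite indicE ler0n].
transitivity (\sum_(s : N.-tuple bool) ((N%:R / 2 + 1 : R)%R)%:E).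
  apply: eq_bigr => s _; rewrite -sum_cw -(esum_Fs s); last exact: cw_ge0.
  rewrite [RHS]esum_mkcond; apply: eq_esum => t _.
  by rewrite indicE; case: (t \in Fs s); rewrite ?mulr1 ?mulr0.
rewrite sumEFin sumr_const card_tuple card_bool.
congr (_%:E); rewrite -(mulr_natl (N%:R / 2 + 1) (2 ^ N)) natrX; ring.
Qed.
End Total.

Section Chains.
Context (R : realType) (N : nat).
Local Open Scope ereal_scope.

Definition chain (s : N.-tuple bool) m := Fs s `&` [set t : TN N | (m <= size (val t))%N].

Lemma esum_chain s m : (m <= N)%N ->
  \esum_(t in chain s m) (ww R t)%:E = (2 ^+ (N - m))%:E.
Proof.
move=> mN; rewrite esum_mkcondr -(sum_vw R mN).
rewrite -(esum_Fs s (g := fun k => if (m <= k)%N then vw R N k else 0%R)); last first.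
  by move=> k; case: ifP => _ //; exact: vw_ge0.
apply: eq_esum => t _; rewrite /ww /=.
case: ifPn => [/set_mem /= ->//|]; case: ifPn => // h /negP []; exact: mem_set.
Qed.
End Chains.

Section BlockLB.
Context (R : realType) (N : nat).
Local Open Scope ereal_scope.

Lemma block_lb (A : set (TN N)) : FN N A ->
  \esum_(t in A) (ww R t)%:E <= blocksup (xN R N) A.
Proof.
move=> /FNP [s As].
have [->|/set0P [t0 At0]] := eqVneq A set0; first by rewrite esum_set0 blocksup_ge0.
pose P k := `[< exists t, A t /\ size (val t) = k >].
have exP : exists k, P k by exists (size (val t0)); apply/asboolP; exists t0.
case: (ex_minnP exP) => m /asboolP [u [Au <-]] hmin.
have hm t : A t -> (size (val u) <= size (val t))%N.
  by move=> At; apply: hmin; apply/asboolP; exists t.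
apply: le_trans _ (blocksup_ge _ Au).
apply: le_trans (esum_subset (B := chain s (size (val u))) _ _) _.
- by move=> t At; split; [apply: As | apply: hm].
- by move=> t _; rewrite lee_fin vw_ge0.
rewrite esum_chain; last exact: (valP u).
by rewrite xNE ger0_norm // exprn_ge0.
Qed.
End BlockLB.

Fixpoint dropf (l : seq bool) : seq bool :=
  match l with false :: l' => dropf l' | _ => l end.
Definition strip (u : seq bool) := rev (dropf (rev u)).

Lemma dropf_nseq j l : dropf (nseq j false ++ l) = dropf l.
Proof. by elim: j. Qed.

Lemma dropfK l : dropf (dropf l) = dropf l.
Proof. by elim: l => [|[] l IH]. Qed.

Lemma dropf_decomp l : l = nseq (size l - size (dropf l)) false ++ dropf l.
Proof.
elim: l => [|[] l IH] //=; first by rewrite subnn.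
have h : (size (dropf l) <= size l)%N.
  by rewrite [X in (_ <= size X)%N]IH size_cat leq_addl.
by rewrite subSn //= -IH.
Qed.

Lemma strip_cat u j : strip (u ++ nseq j false) = strip u.
Proof. by rewrite /strip rev_cat rev_nseq dropf_nseq. Qed.

Lemma stripK u : strip (strip u) = strip u.
Proof. by rewrite /strip revK dropfK. Qed.

Lemma strip_decomp u : u = strip u ++ nseq (size u - size (strip u)) false.
Proof.
rewrite /strip size_rev -(size_rev u) -rev_nseq -rev_cat -dropf_decomp.
by rewrite revK.
Qed.

Lemma size_strip u : (size (strip u) <= size u)%N.
Proof. by rewrite [X in (_ <= size X)%N]strip_decomp size_cat leq_addr. Qed.

Section Fibers.
Context (R : realType) (N : nat).
Local Open Scope ereal_scope.

Lemma pad_size (u : seq bool) : size (take N (u ++ nseq N false)) == N.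
Proof. by rewrite size_takel // size_cat size_nseq leq_addl. Qed.
Definition pad (u : seq bool) : N.-tuple bool := Tuple (pad_size u).

Lemma take_pad u k : (size u <= k <= N)%N ->
  take k (pad u) = u ++ nseq (k - size u) false.
Proof.
move=> /andP[uk kN]; rewrite /= take_takel // take_cat ltnNge uk /=.
by rewrite take_nseq // leq_subLR (leq_trans kN) // leq_addl.
Qed.

Definition fib (t0 : TN N) := [set t : TN N | strip (val t) = strip (val t0)].

Lemma fib_chain (t0 : TN N) :
  fib t0 = chain (pad (strip (val t0))) (size (strip (val t0))).
Proof.
set u := strip (val t0).
have uN : (size u <= N)%N := leq_trans (size_strip _) (valP t0).
apply/seteqP; split => t.
  rewrite /fib /= => ht; have {}ht : strip (val t) = u := ht.
  have hs : (size u <= size (val t))%N by rewrite -ht size_strip.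
  split => //; apply/FsP; rewrite take_pad; last by rewrite hs (valP t).
  by rewrite -ht -strip_decomp.
move=> [/FsP ht hs]; rewrite /fib /=.
rewrite -ht take_pad; last by rewrite hs (valP t).
by rewrite strip_cat stripK.
Qed.

Lemma fib_ub (t0 : TN N) :
  blocksup (xN R N) (fib t0) <= \esum_(t in fib t0) (ww R t)%:E.
Proof.
rewrite fib_chain esum_chain; last exact: leq_trans (size_strip _) (valP t0).
apply: blocksup_le; first by rewrite exprn_ge0.
move=> t [_ /= hs]; rewrite xNE ger0_norm ?exprn_ge0 //.
by rewrite ler_eXn2l ?ltr1n // leq_sub2l.
Qed.

Definition Pfib : set (set (TN N)) := [set set0] `|` [set fib t0 | t0 in setT].

Lemma set0_FN : FN N set0.
Proof.
apply/FNP; exists (pad [::]); by [].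
Qed.

Lemma Pfib_part : partitions_in (FN N) Pfib.
Proof.
split; first split.
- by left.
- apply/seteqP; split => // t _; exists (fib t); last by [].
  by right; exists t.
- move=> A B [->|[a _ <-]] [->|[b _ <-]] ne; rewrite ?set0I ?setI0 //.
  apply/seteqP; split => // t [/= ha hb]; apply: ne.
  by apply/seteqP; split => x; rewrite /fib /= => ->; [rewrite -ha | rewrite -hb].
- move=> A [->|[a _ <-]]; first exact: set0_FN.
  apply/FNP; exists (pad (strip (val a))); rewrite fib_chain; exact: subIsetl.
Qed.

Theorem part1 : upnorm (FN N) (xN R N) = ((2 ^+ N) * (1 + N%:R / 2))%:E.
Proof.
apply/eqP; rewrite eq_le; apply/andP; split.
  rewrite -esum_ww_total; apply: (upnorm_ub Pfib_part).
    by move=> t; rewrite lee_fin vw_ge0.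
  move=> A [->|[a _ <-]]; last exact: fib_ub.
  by rewrite esum_set0; apply: blocksup_le => // p.
rewrite -esum_ww_total; apply: upnorm_lb.
  by move=> t; rewrite lee_fin vw_ge0.
exact: block_lb.
Qed.
End Fibers.

Section GeneralB.
Context (R : realType) (I : choiceType).
Local Open Scope ereal_scope.

Lemma esum_ind (A : set I) (p0 : I) :
  \esum_(i in A) (\1_[set p0] i : R)%:E = if `[< A p0 >] then 1 else 0.
Proof.
transitivity (\esum_(i in A `&` [set p0]) (1 : \bar R)).
  rewrite esum_mkcondr; apply: eq_esum => i _; rewrite indicE.
  by case: (i \in [set p0]).
case: asboolP => Ap0.
  have -> : A `&` [set p0] = [set p0].
    by apply/seteqP; split => [i [] //|i /= ->].
  by rewrite esum_set1.
have -> : A `&` [set p0] = set0.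
  by apply/seteqP; split => [i [Ai /= e]|//]; apply: Ap0; rewrite -e.
by rewrite esum_set0.
Qed.

Lemma upnorm_lb1 (F : set (set I)) (x : I -> R) (p0 : I) :
  (1 <= `|x p0|)%R -> 1 <= upnorm F x.
Proof.
move=> h; have := @upnorm_lb R I F x (fun i => (\1_[set p0] i : R)%:E).
rewrite esum_ind; rewrite asboolT //; apply.
  by move=> i; rewrite lee_fin indicE ler0n.
move=> A _; rewrite esum_ind; case: asboolP => Ap0; last exact: blocksup_ge0.
by apply: le_trans (blocksup_ge _ Ap0); rewrite lee_fin.
Qed.

Definition P1 (S : set I) : set (set I) :=
  [set set0; S] `|` [set [set p] | p in ~` S].

Lemma P1_part (F : set (set I)) (S : set I) :
  F S -> F set0 -> (forall p, ~ S p -> F [set p]) -> partitions_in F (P1 S).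
Proof.
move=> FS F0 F1; split; first split.
- by left; left.
- apply/seteqP; split => // p _.
  have [Sp|nSp] := pselect (S p); first by exists S => //; left; right.
  by exists [set p] => //; right; exists p.
- move=> A B hA hB ne; apply/seteqP; split => // p [Ap Bp]; apply: ne.
  case: hA Ap => [[->|->]|[a na <-]] /= Ap; case: hB Bp => [[->|->]|[b nb <-]] /= Bp //.
  + by case: nb; rewrite -Bp.
  + by case: na; rewrite -Ap.
  + by rewrite -Ap -Bp.
- by move=> A [[->|->]|[a na <-]] //; apply: F1.
Qed.

Lemma upnorm_ub1 (F : set (set I)) (x : I -> R) (S : set I) (p0 : I) :
  F S -> F set0 -> (forall p, ~ S p -> F [set p]) -> S p0 ->
  (forall p, ~ S p -> x p = 0%R) -> (forall p, `|x p| <= 1)%R ->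
  upnorm F x <= 1.
Proof.
move=> FS F0 F1 Sp0 x0 x1.
have := @upnorm_ub R I F x (fun i => (\1_[set p0] i : R)%:E) _ (P1_part FS F0 F1).
rewrite esum_ind asboolT //; apply.
  by move=> i; rewrite lee_fin indicE ler0n.
move=> A [[->|->]|[a na <-]].
- by apply: le_trans (esum_ge0 _); [apply: blocksup_le => //|move=> *; rewrite lee_fin indicE ler0n].
- by rewrite esum_ind asboolT //; apply: blocksup_le.
- apply: le_trans (esum_ge0 _); last by move=> *; rewrite lee_fin indicE ler0n.
  by apply: blocksup_le => // p /= ->; rewrite x0 // normr0.
Qed.

End GeneralB.

Section Part23.
Context (R : realType).
Local Open Scope ereal_scope.

Lemma Fs_pad N (p : TN N) : Fs (pad N (val p)) p.
Proof.
apply/FsP; rewrite take_pad; last by rewrite leqnn (valP p).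
by rewrite subnn cats0.
Qed.

Lemma FN1 N (p : TN N) : FN N [set p].
Proof. by apply/FNP; exists (pad N (val p)) => q /= ->; apply: Fs_pad. Qed.

Lemma FNs N (s : N.-tuple bool) : FN N (Fs s).
Proof. by apply/FNP; exists s. Qed.

Theorem part2 N (s : N.-tuple bool) :
  upnorm (FN N) (\1_(Fs s) : TN N -> R) = 1%:E.
Proof.
apply/eqP; rewrite eq_le; apply/andP; split.
  apply: (@upnorm_ub1 R _ (FN N) _ (Fs s) (tk s 0)) => //.
  - exact: FNs.
  - exact: set0_FN.
  - by move=> p _; apply: FN1.
  - exact: Fs_tk.
  - by move=> p nS; rewrite indicE memNset.
  - by move=> p; rewrite indicE; case: (p \in Fs s); rewrite ?normr1 ?normr0.
apply: (@upnorm_lb1 R _ (FN N) _ (tk s 0)).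
by rewrite indicE mem_set ?normr1 //; apply: Fs_tk.
Qed.

Lemma FN_finite N (B : set (TN N)) : FN N B -> finite_set B.
Proof.
move=> /FNP [s Bs]; apply: (sub_finite_set Bs).
rewrite Fs_image; apply: finite_image; exact: finite_II.
Qed.

Lemma finite_TN N : finite_set [set: TN N].
Proof.
pose f (ks : nat * N.-tuple bool) := tk ks.2 ks.1.
apply: (@sub_finite_set _ _ (f @` (`I_N.+1 `*` [set: N.-tuple bool]))).
  move=> t _; exists (size (val t), pad N (val t)).
    by split => //=; rewrite ltnS; exact: (valP t).
  by apply: val_inj => /=; have := Fs_pad t; move/FsP.
apply: finite_image; apply: finite_setX; [exact: finite_II|exact: finite_finset].
Qed.

Theorem Funion_finite : finite_members Funion.
Proof. by move=> A [N [B FB ->]]; apply: finite_image; apply: FN_finite. Qed.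

Theorem Funion_hered : hereditary Funion.
Proof.
move=> A A' [N [B FB ->]] A'A; exists N.
exists [set t | B t /\ A' (existT _ N t)].
  by apply: (@hc_hered _ _ B) => // t [].
apply/seteqP; split => [p A'p|p [t [Bt A't] <-] //].
have [t Bt e] := A'A _ A'p; exists t => //; split => //; by rewrite e.
Qed.

Theorem Funion_cover : covering Funion.
Proof.
apply/seteqP; split => // [[N t]] _; exists (existT _ N @` [set t]).
  by exists N; exists [set t] => //; apply: FN1.
by exists t.
Qed.
End Part23.

From Stdlib Require Eqdep_dec PeanoNat.

Lemma existT_inj N (t1 t2 : TN N) : existT TN N t1 = existT TN N t2 -> t1 = t2.
Proof. exact: (Eqdep_dec.inj_pair2_eq_dec _ PeanoNat.Nat.eq_dec). Qed.

Lemma closed_notall (ps : seq Tunion) :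
  closed [set g : {ptws Tunion -> bool} | ~~ all g ps].
Proof.
elim: ps => [|p ps IH].
  have -> : [set g : {ptws Tunion -> bool} | ~~ all g [::]] = set0.
    by apply/seteqP; split => // g.
  exact: closed0.
have -> : [set g : {ptws Tunion -> bool} | ~~ all g (p :: ps)] =
    [set g : {ptws Tunion -> bool} | g p = false] `|` [set g : {ptws Tunion -> bool} | ~~ all g ps].
  apply/seteqP; split => g /=.
    by case: (g p) => /= h; [right|left].
  by case => [-> //| /negbTE ->]; rewrite andbF.
apply: closedU => //.
have -> : [set g : {ptws Tunion -> bool} | g p = false] = (proj p) @^-1` [set false] by [].
apply: preimage_closed; last exact: discrete_closed.
by move=> g _; exact: proj_continuous.
Qed.

Theorem Funion_compact : compact [set charfun A | A in Funion].
Proof.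
pose Bad := [set ps : seq Tunion | ~ exists2 A, Funion A & forall p, p \in ps -> A p].
have -> : [set charfun A | A in Funion] =
    \bigcap_(ps in Bad) [set g : {ptws Tunion -> bool} | ~~ all g ps].
  apply/seteqP; split.
    move=> _ [A FA <-] ps bps /=; apply/negP => /allP h; apply: bps.
    by exists A => // p /h; rewrite /charfun => /asboolP.
  move=> g hg.
  have hall ps : all g ps -> ~ Bad ps by move=> a b; have /= := hg _ b; rewrite a.
  pose A := [set p | g p].
  have gA : charfun A = g by apply: funext => p; rewrite /charfun asboolb.
  exists A => //; rewrite {gA}.
  have [[[N t0] gp0]|none] := pselect (exists p, g p); last first.
    exists 0%N; exists set0; first exact: set0_FN.
    apply/seteqP; split => [p gp|p [t]] //; exfalso; apply: none; by exists p.
  have tagN p : g p -> tag p = N.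
    case: p => N' t gp /=; apply: contrapT => ne.
    apply: (hall [:: existT TN N t0; existT TN N' t]); first by rewrite /= gp0 gp.
    move=> [A' [M [B' FB' ->]] h].
    have [b1 _ e1] := h (existT TN N t0) (mem_head _ _).
    have [b2 _ e2] : (existT TN M @` B') (existT TN N' t).
      by apply: h; rewrite !inE eqxx orbT.
    by apply: ne; move: (congr1 tag e1) (congr1 tag e2) => /= <- <-.
  pose B := [set t : TN N | g (existT TN N t)].
  have FB : FN N B.
    apply: contrapT => nFB.
    have finB : finite_set B := sub_finite_set (@subsetT _ B) (finite_TN N).
    pose l := [seq existT TN N t | t <- finmap.enum_fset (fset_set B)].
    have mem_l t : B t -> existT TN N t \in l.
      by move=> Bt; apply/mapP; exists t => //; rewrite in_fset_set // inE.
    apply: (hall l).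
      by apply/allP => p /mapP [t]; rewrite in_fset_set // inE => Bt ->.
    move=> [A' [M [B' FB' ->]] h].
    apply: nFB.
    have [[t1 Bt1]|B0] := pselect (exists t, B t); last first.
      have -> : B = set0 by apply/seteqP; split => // t Bt; apply: B0; exists t.
      exact: set0_FN.
    have [b1 _ e1] := h _ (mem_l _ Bt1).
    have eMN : M = N := congr1 tag e1.
    subst M.
    apply: (@hc_hered _ _ B' B FB') => t Bt.
    by have [b Bb /existT_inj <-] := h _ (mem_l _ Bt).
  exists N; exists B => //.
  apply/seteqP; split => [[N' t] gp|p [t Bt <-]] //.
  have /= eN := tagN _ gp; subst N'; by exists t.
apply: (@subclosed_compact _ _ [set: {ptws Tunion -> bool}]) => //.
  by apply: closed_bigI => ps _; exact: closed_notall.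
have := @tychonoff Tunion (fun _ => bool) (fun _ => setT) (fun _ => bool_compact).
by congr compact; apply/seteqP; split.
Qed.

Section Union.
Context (R : realType).
Local Open Scope ereal_scope.

Definition emb N (f : TN N -> R) (p : Tunion) : R :=
  match p with existT N' t =>
    match PeanoNat.Nat.eq_dec N' N with
    | left e => f (eq_rect N' TN t N e)
    | right _ => 0%R
    end
  end.

Lemma embE N (f : TN N -> R) (t : TN N) : emb f (existT TN N t) = f t.
Proof.
rewrite /emb; case: PeanoNat.Nat.eq_dec => [e|//].
by rewrite (Eqdep_dec.UIP_refl_nat _ e).
Qed.

Lemma embN N (f : TN N -> R) N' (t : TN N') : N' <> N -> emb f (existT TN N' t) = 0%R.
Proof. by rewrite /emb; case: PeanoNat.Nat.eq_dec. Qed.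

Lemma emb_ge0 N (f : TN N -> R) p : (forall t, 0 <= f t)%R -> (0 <= emb f p)%R.
Proof. by case: p => N' t h; rewrite /emb; case: PeanoNat.Nat.eq_dec. Qed.

Lemma emb_sum N n (f : 'I_n -> TN N -> R) p :
  emb (fun t => \sum_(i < n) f i t)%R p = (\sum_(i < n) emb (f i) p)%R.
Proof.
case: p => N' t; have [e|ne] := PeanoNat.Nat.eq_dec N' N.
  by subst N'; rewrite embE; apply: eq_bigr => i _; rewrite embE.
by rewrite embN // big1 // => i _; rewrite embN.
Qed.

Lemma emb_c00 N (f : TN N -> R) : c00 (emb f).
Proof.
apply: (@sub_finite_set _ _ (existT TN N @` setT)); last first.
  by apply: finite_image; exact: finite_TN.
move=> [N' t] h; have [e|ne] := PeanoNat.Nat.eq_dec N' N.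
  by subst N'; exists t.
have : emb f (existT TN N' t) != 0%R := h.
by rewrite embN // eqxx.
Qed.

Lemma blocksup_image (I J : choiceType) (x : J -> R) (f : I -> J) (B : set I) :
  blocksup x (f @` B) = blocksup (fun t => x (f t)) B.
Proof.
rewrite /blocksup; congr ereal_sup; congr setU.
apply/seteqP; split => y.
  by move=> [p [t Bt <-] <-]; exists t.
by move=> [t Bt <-]; exists (f t) => //; exists t.
Qed.

Lemma union_lb N :
  ((2 ^+ N) * (1 + N%:R / 2))%:E <= upnorm Funion (emb (xN R N)).
Proof.
apply: le_trans (upnorm_lb (W := fun p => (emb (ww R (N:=N)) p)%:E) _ _).
- rewrite -esum_ww_total.
  apply: le_trans (_ : _ <= \esum_(p in existT TN N @` setT) (emb (ww R (N:=N)) p)%:E) _.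
    rewrite esum_image; last by move=> t1 t2 _ _ /existT_inj.
    by apply: le_esum => t _; rewrite embE.
  apply: esum_subset => // p _; rewrite lee_fin; apply: emb_ge0 => t; exact: vw_ge0.
- by move=> p; rewrite lee_fin; apply: emb_ge0 => t; exact: vw_ge0.
move=> A [M [B FB ->]]; have [e|ne] := PeanoNat.Nat.eq_dec M N.
  subst M; rewrite esum_image; last by move=> t1 t2 _ _ /existT_inj.
  rewrite blocksup_image.
  have -> : (fun t => emb (xN R N) (existT TN N t)) = xN R N.
    by apply: funext => t; rewrite embE.
  apply: le_trans (block_lb R FB); apply: le_esum => t _; by rewrite embE.
rewrite esum1; first exact: blocksup_ge0.
by move=> _ [t _ <-]; rewrite embN.
Qed.

Definition fam N (i : 'I_#|{: N.-tuple bool}|) : Tunion -> R :=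
  emb (\1_(Fs (enum_val i)) : TN N -> R).

Lemma fam_sum N : (fun p => \sum_(i < #|{: N.-tuple bool}|) fam i p)%R = emb (xN R N).
Proof.
apply: funext => p; rewrite /fam -emb_sum; congr emb.
apply: funext => t; rewrite /xN.
rewrite -(big_enum_val (fun s : N.-tuple bool => (\1_(Fs s) t : R))).
by apply: eq_bigl => s; rewrite inE.
Qed.

Lemma fam_ub N (i : 'I_#|{: N.-tuple bool}|) : upnorm Funion (fam i) <= 1.
Proof.
set s := enum_val i.
apply: (@upnorm_ub1 R _ Funion _ (existT TN N @` Fs s) (existT TN N (tk s 0))).
- by exists N; exists (Fs s) => //; exact: FNs.
- by exists 0%N; exists set0; [exact: set0_FN | rewrite image_set0].
- move=> [N' t] _; exists N'; exists [set t]; first exact: FN1.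
  by rewrite image_set1.
- by exists (tk s 0) => //; apply: Fs_tk.
- move=> [N' t] nS; have [e|ne] := PeanoNat.Nat.eq_dec N' N; last by rewrite /fam embN.
  subst N'; rewrite /fam embE indicE memNset //.
  by move=> Ft; apply: nS; exists t.
- move=> [N' t]; have [e|ne] := PeanoNat.Nat.eq_dec N' N; last by rewrite /fam embN ?normr0.
  subst N'; rewrite /fam embE indicE.
  by case: (t \in Fs s); rewrite ?normr1 ?normr0.
Qed.

Lemma card_fam N : (#|{: N.-tuple bool}|%:R : R) = (2 ^+ N)%R.
Proof. by rewrite card_tuple card_bool natrX. Qed.

Lemma sum_fam_ub N (c : R) : (0 <= c)%R ->
  \sum_(i < #|{: N.-tuple bool}|) (c%:E * upnorm Funion (fam i)) <= (c * 2 ^+ N)%:E.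
Proof.
move=> c0; apply: le_trans (_ : _ <= \sum_(i < #|{: N.-tuple bool}|) c%:E) _.
  apply: lee_sum => i _; rewrite -[X in _ <= X]mule1; apply: lee_wpmul2l.
    by rewrite lee_fin.
  exact: fam_ub.
by rewrite sumEFin sumr_const card_ord -(mulr_natr c) card_fam.
Qed.

End Union.

Section Dual.
Context (R : realType) (I : choiceType) (F : set (set I)).
Local Open Scope ereal_scope.

Lemma c00_0 : c00 (fun _ : I => 0%R : R).
Proof. by apply: (@sub_finite_set _ _ set0) => // k /=; rewrite eqxx. Qed.

Lemma c00_add (f g : I -> R) : c00 f -> c00 g -> c00 (fun k => f k + g k)%R.
Proof.
move=> cf cg; apply: (@sub_finite_set _ _ ([set k | f k != 0%R] `|` [set k | g k != 0%R])).
  move=> k /= h; apply: contrapT => /not_orP [/negP/negPn/eqP f0 /negP/negPn/eqP g0].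
  by move: h; rewrite f0 g0 addr0 eqxx.
by rewrite finite_setU.
Qed.

Lemma c00_sum n (x : 'I_n -> I -> R) : (forall i, c00 (x i)) ->
  c00 (fun t => \sum_(i < n) x i t)%R.
Proof.
elim: n x => [x _|n IH x cx].
  have -> : (fun t => \sum_(i < 0) x i t)%R = (fun _ => 0%R) by apply: funext => t; rewrite big_ord0.
  exact: c00_0.
have -> : (fun t => \sum_(i < n.+1) x i t)%R =
   (fun t => (\sum_(i < n) x (widen_ord (leqnSn n) i) t) + x ord_max t)%R.
  by apply: funext => t; rewrite big_ord_recr.
by apply: c00_add => //; apply: IH.
Qed.

Lemma pairingD (f g x : I -> R) : c00 x ->
  pairing (fun k => f k + g k)%R x = (pairing f x + pairing g x)%R.
Proof.
move=> cx; rewrite /pairing -fsbig_split //; apply: (@eq_fsbigr _ _ _ I) => k _.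
by rewrite mulrDl.
Qed.

Lemma dual_tri (f g : I -> R) :
  dualnorm F (fun k => f k + g k)%R <= dualnorm F f + dualnorm F g.
Proof.
apply: ge_ereal_sup => _ [x [cx lx] <-]; rewrite pairingD //.
apply: le_trans (_ : _ <= (`|pairing f x|)%:E + (`|pairing g x|)%:E) _.
  by rewrite -EFinD lee_fin ler_normD.
by apply: leeD; apply: ereal_sup_ubound; exists x.
Qed.

Lemma dual0 : dualnorm F (fun _ : I => 0%R : R) <= 0.
Proof.
apply: ge_ereal_sup => _ [x _ <-].
by rewrite /pairing fsbig1 ?normr0 // => k _; rewrite mul0r.
Qed.

Lemma dual_sum n (h : 'I_n -> I -> R) :
  dualnorm F (fun t => \sum_(i < n) h i t)%R <= \sum_(i < n) dualnorm F (h i).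
Proof.
elim: n h => [h|n IH h].
  have -> : (fun t => \sum_(i < 0) h i t)%R = (fun _ => 0%R) by apply: funext => t; rewrite big_ord0.
  by rewrite big_ord0; exact: dual0.
have -> : (fun t => \sum_(i < n.+1) h i t)%R =
   (fun t => (\sum_(i < n) h (widen_ord (leqnSn n) i) t) + h ord_max t)%R.
  by apply: funext => t; rewrite big_ord_recr.
rewrite big_ord_recr /=; apply: le_trans (dual_tri _ _) _.
by apply: leeD => //; apply: IH.
Qed.

Lemma Jsum (J : (I -> R) -> (I -> R)) :
  (forall (c : R) (x y : I -> R), c00 x -> c00 y ->
     J (fun t => c * x t + y t)%R = (fun t => c * J x t + J y t)%R) ->
  forall n (x : 'I_n -> I -> R), (forall i, c00 (x i)) ->
  J (fun t => \sum_(i < n) x i t)%R = (fun t => \sum_(i < n) J (x i) t)%R.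
Proof.
move=> lin; elim => [x _|n IH x cx].
  have -> : (fun t => \sum_(i < 0) x i t)%R = (fun _ => 0%R) by apply: funext => t; rewrite big_ord0.
  have h := lin 1%R _ _ c00_0 c00_0.
  rewrite (_ : (fun t : I => 1 * 0 + 0)%R = (fun _ => 0%R)) in h; last first.
    by apply: funext => t; rewrite mul1r addr0.
  apply: funext => t; rewrite big_ord0.
  move: (congr1 (fun f => f t) h) => /=; rewrite mul1r => e.
  have : (J (fun=> 0%R) t + J (fun=> 0%R) t - J (fun=> 0%R) t = J (fun=> 0%R) t - J (fun=> 0%R) t)%R.
    by rewrite -e.
  by rewrite addrK subrr.
have -> : (fun t => \sum_(i < n.+1) x i t)%R =
   (fun t => 1 * (fun t => \sum_(i < n) x (widen_ord (leqnSn n) i) t) t + x ord_max t)%R.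
  by apply: funext => t; rewrite big_ord_recr /= mul1r.
rewrite lin //; last exact: c00_sum.
rewrite IH //; apply: funext => t; by rewrite big_ord_recr /= mul1r.
Qed.

End Dual.

Section Final.
Context (R : realType).
Local Open Scope ereal_scope.

Lemma sum_fam_ub1 N :
  \sum_(i < #|{: N.-tuple bool}|) upnorm Funion (@fam R N i) <= (2 ^+ N : R)%:E.
Proof.
apply: le_trans (_ : _ <= \sum_(i < #|{: N.-tuple bool}|) 1) _.
  by apply: lee_sum => i _; exact: fam_ub.
by rewrite sumEFin sumr_const card_ord card_fam.
Qed.

Lemma pow_gt0 N : (0 < 2 ^+ N :> R)%R.
Proof. by rewrite exprn_gt0. Qed.

Theorem part4 : ~ exists C : R, (0 < C)%R /\
       forall (n : nat) (x : 'I_n -> Tunion -> R),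
         (forall i, c00 (x i)) ->
         (upnorm Funion (fun t => (\sum_(i < n) x i t)%R)
            <= C%:E * \sum_(i < n) upnorm Funion (x i))%E.
Proof.
move=> [C [C0 hC]].
pose N := (Num.Def.trunc (2 * C)).+1.
have hN : (2 * C < N%:R)%R := truncnS_gt _.
have := hC _ (@fam R N) (fun i => emb_c00 _).
rewrite fam_sum => h.
have := le_trans (union_lb R N) h.
move/le_trans => /(_ _ (lee_wpmul2l _ (sum_fam_ub1 N))).
rewrite lee_fin => /(_ (ltW C0)); rewrite -EFinM lee_fin mulrC.
rewrite ler_pM2r ?pow_gt0 // => h2.
lra.
Qed.

Theorem part5 : ~ exists (J : (Tunion -> R) -> (Tunion -> R)) (a b : R),
       [/\ (0 < a)%R, (0 < b)%R,
        (forall (c : R) (x y : Tunion -> R), c00 x -> c00 y ->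
            J (fun t => c * x t + y t)%R = (fun t => c * J x t + J y t)%R) &
        (forall x, c00 x ->
            (a%:E * upnorm Funion x <= dualnorm Funion (J x))%E /\
            (dualnorm Funion (J x) <= b%:E * upnorm Funion x)%E)].
Proof.
move=> [J [a [b [a0 b0 lin hJ]]]].
pose N := (Num.Def.trunc (2 * b / a)).+1.
have hN : (2 * b / a < N%:R)%R := truncnS_gt _.
have h1 := (hJ _ (emb_c00 (xN R N))).1.
have h2 : a%:E * ((2 ^+ N) * (1 + N%:R / 2))%:E <= a%:E * upnorm Funion (emb (xN R N)).
  by apply: lee_wpmul2l; [rewrite lee_fin ltW|exact: union_lb].
have h3 : dualnorm Funion (J (emb (xN R N))) <= (b * 2 ^+ N)%:E.
  rewrite -fam_sum (Jsum lin); last by move=> i; exact: emb_c00.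
  apply: le_trans (dual_sum _ _) _.
  apply: le_trans (sum_fam_ub N (ltW b0)).
  by apply: lee_sum => i _; exact: (hJ _ (emb_c00 _)).2.
have := le_trans h2 (le_trans h1 h3).
rewrite -EFinM lee_fin => h4.
move: hN; rewrite ltr_pdivrMr // => h5.
have p0 := pow_gt0 N; move: h4 p0; set p := (2 ^+ N)%R => h4 p0.
nra.
Qed.

End Final.

Theorem mainTheorem12 (R : realType) :
  (* ||x||^{F_N} = 2^N (1 + N/2) *)
  (forall N : nat,
      upnorm (FN N) (xN R N) = ((2 ^+ N) * (1 + N%:R / 2))%:E) /\
  (* ||chi_{F_s}||^{F_N} = 1 *)
  (forall (N : nat) (s : N.-tuple bool),
      upnorm (FN N) (\1_(Fs s) : TN N -> R) = 1%:E) /\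
  (* F is a compact hereditary family of finite sets covering T *)
  (finite_members Funion /\ hereditary Funion /\ covering Funion /\
   compact [set charfun A | A in Funion]) /\
  (* no constant C > 0 with ||sum x_i||^F <= C sum ||x_i||^F on c00 *)
  (~ exists C : R, 0 < C /\
       forall (n : nat) (x : 'I_n -> Tunion -> R),
         (forall i, c00 (x i)) ->
         (upnorm Funion (fun t => (\sum_(i < n) x i t)%R)
            <= C%:E * \sum_(i < n) upnorm Funion (x i))%E) /\
  (* X^F is not isomorphic to X_F^* : there is no linear map from
     (c00, ||.||^F) into X_F^* (represented as coefficient functions with
     the dual norm) which is an isomorphism onto its image *)
  (~ exists (J : (Tunion -> R) -> (Tunion -> R)) (a b : R),
       [/\ 0 < a, 0 < b,
        (forall (c : R) (x y : Tunion -> R), c00 x -> c00 y ->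
            J (fun t => c * x t + y t) = (fun t => c * J x t + J y t)) &
        (forall x, c00 x ->
            (a%:E * upnorm Funion x <= dualnorm Funion (J x))%E /\
            (dualnorm Funion (J x) <= b%:E * upnorm Funion x)%E)]).
Proof.
split; first exact: part1.
split; first exact: part2.
split; first by split; [exact: Funion_finite|split; [exact: Funion_hered|split; [exact: Funion_cover|exact: Funion_compact]]].
split; [exact: part4|exact: part5].
Qed.
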